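(* Let $\mathcal I$ be an admissible analytic $P$-ideal on $\mathbb N$. If $A\in\mathcal{I}\mathcal{A}$ and $G$ is the subgroup of $\mathbb T$ generated by $A$, then $G\in\mathcal{I}\mathcal{A}$.
   Context: $\mathbb T=\mathbb R/\mathbb Z$ identified with $[0,1]$ (0 and 1 identified), with addition mod 1; $\|x\|$ is the distance from $x$ to the nearest integer. An ideal $\mathcal I$ on $\mathbb N$ is a nonempty family of subsets of $\mathbb N$ closed under finite unions and subsets with $\mathbb N\notin\mathcal I$; admissible means all singletons belong to it; $P$-ideal means for every sequence $(A_n)$ in $\mathcal I$ there is $A\in\mathcal I$ with $A_n\setminus A$ finite for all $n$; analytic means analytic as a subset of $2^{\mathbb N}$. A sequence $(x_n)$ $\mathcal I$-converges to $x$ if for every open $U\ni x$, $\{n:x_n\notin U\}\in\mathcal I$. A set $X\subseteq[0,1]$ is $\mathcal I$-Arbault if there is an increasing sequence of naturals $(a_n)$ such that $\|a_nx\|$ $\mathcal I$-converges to $0$ for every $x\in X$; $\mathcal{I}\mathcal{A}$ denotes the family of all such sets. *)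

(* Defs.v *)
From HB Require Import structures.
From mathcomp Require Import all_boot all_order all_algebra.
From mathcomp Require Import all_classical all_reals all_analysis.
Set Implicit Arguments. Unset Strict Implicit. Unset Printing Implicit Defensive.
Import Order.TTheory GRing.Theory Num.Theory.
Import numFieldNormedType.Exports.
Local Open Scope classical_set_scope.
Local Open Scope ring_scope.

Definition is_ideal (I : set (set nat)) : Prop :=
  [/\ I !=set0,
      (forall A B : set nat, I A -> B `<=` A -> I B),
      (forall A B : set nat, I A -> I B -> I (A `|` B)) &
      ~ I setT].

Definition admissible (I : set (set nat)) : Prop := forall n : nat, I [set n].

Definition P_ideal (I : set (set nat)) : Prop :=
  forall An : nat -> set nat, (forall n, I (An n)) ->
    exists2 A, I A & forall n, finite_set (An n `\` A).

(* Continuity of a map from Baire space N^N to Cantor space 2^N (subsets of N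
   identified with their characteristic functions), w.r.t. product topologies. *)
Definition baire_cantor_continuous (f : (nat -> nat) -> set nat) : Prop :=
  forall (x : nat -> nat) (n : nat), exists m : nat,
    forall y : nat -> nat, (forall k, (k < m)%N -> y k = x k) ->
      forall k, (k < n)%N -> (f y k <-> f x k).

Definition analytic_family (I : set (set nat)) : Prop :=
  I = set0 \/ exists f : (nat -> nat) -> set nat,
    baire_cantor_continuous f /\ range f = I.

Definition I_converges (R : realType) (I : set (set nat)) (s : nat -> R) (l : R)
  : Prop :=
  forall U : set R, open U -> U l -> I [set n | ~ U (s n)].

Definition dist_int (R : realType) (x : R) : R :=
  let t := x - (Num.floor x)%:~R in Num.min t (1 - t).

Definition strictly_increasing (a : nat -> nat) : Prop := forall n, (a n < a n.+1)%N.

(* X subset of [0,1] (a model of T) is I-Arbault. *)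
Definition I_Arbault (R : realType) (I : set (set nat)) (X : set R) : Prop :=
  exists a : nat -> nat, strictly_increasing a /\
    forall x, X x -> I_converges I (fun n => dist_int ((a n)%:R * x)) 0.

(* The subgroup of T = R/Z generated by A, represented inside [0,1]:
   points of [0,1] congruent mod 1 to an integer combination of elements of A. *)
Definition generated_subgroup (R : realType) (A : set R) : set R :=
  [set y | 0 <= y <= 1 /\
    exists s : seq (int * R), (forall p, p \in s -> A p.2) /\
      exists z : int, y - \sum_(p <- s) p.1%:~R * p.2 = z%:~R].

(* Main.v *)
Require Import Defs.
From HB Require Import structures.
From mathcomp Require Import all_boot all_order all_algebra.
From mathcomp Require Import all_classical all_reals all_analysis.
From mathcomp Require Import lra ring.
Import Order.TTheory GRing.Theory Num.Theory.
Import numFieldNormedType.Exports.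
Local Open Scope classical_set_scope.
Local Open Scope ring_scope.

Section D.
Variable R : realType.

Lemma floor_bounds (x : R) :
  (Num.floor x)%:~R <= x /\ x < (Num.floor x)%:~R + 1.
Proof.
split; first exact: floor_le.
have := floor_lt_int x (Num.floor x + 1).
rewrite ltzD1 lexx => /esym. by rewrite intrD.
Qed.

Lemma dist_le (x : R) (m : int) : dist_int x <= `|x - m%:~R|.
Proof.
rewrite /dist_int /=; have [h1 h2] := floor_bounds x.
have [hm|hm] := lerP m (Num.floor x).
- have : (m%:~R : R) <= (Num.floor x)%:~R by rewrite ler_int.
  move=> hm'. rewrite ger0_norm; last lra.
  rewrite ge_min; apply/orP; left; lra.
- have : (Num.floor x + 1)%:~R <= (m%:~R : R) by rewrite ler_int lezD1.
  rewrite intrD => hm'. rewrite ler0_norm; last lra.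
  rewrite ge_min; apply/orP; right; lra.
Qed.

Lemma dist_ex (x : R) : exists m : int, dist_int x = `|x - m%:~R|.
Proof.
rewrite /dist_int /=; have [h1 h2] := floor_bounds x.
have [h|h] := lerP (x - (Num.floor x)%:~R) (1 - (x - (Num.floor x)%:~R)).
- exists (Num.floor x); rewrite ger0_norm; last lra.
  by [].
- exists (Num.floor x + 1); rewrite intrD ler0_norm; last lra.
  lra.
Qed.

Lemma dist_ge0 (x : R) : 0 <= dist_int x.
Proof. by have [m ->] := dist_ex x. Qed.

Lemma sum_bound (c : R) (s : seq (int * R)) : exists M : int,
  `|c * \sum_(p <- s) p.1%:~R * p.2 - M%:~R| <=
    \sum_(p <- s) `|(p.1%:~R : R)| * dist_int (c * p.2).
Proof.
elim: s => [|p s [M IH]].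
  by exists 0; rewrite !big_nil mulr0 subr0 normr0.
have [m Hm] := dist_ex (c * p.2).
exists (p.1 * m + M); rewrite !big_cons intrD intrM.
have -> : c * (p.1%:~R * p.2 + \sum_(p <- s) p.1%:~R * p.2) -
   (p.1%:~R * m%:~R + M%:~R) =
   p.1%:~R * (c * p.2 - m%:~R) + (c * \sum_(p <- s) p.1%:~R * p.2 - M%:~R)
  by ring.
apply: le_trans (ler_normD _ _) _.
by rewrite normrM Hm lerD.
Qed.

Definition small (I : set (set nat)) (g : nat -> R) :=
  forall e : R, 0 < e -> I [set n | e <= g n].

Lemma ideal0 I : is_ideal I -> I set0.
Proof. by case=> [[A HA] Hsub _ _]; apply: (Hsub A). Qed.

Lemma small_le I (g h : nat -> R) : is_ideal I -> (forall n, g n <= h n) ->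
  small I h -> small I g.
Proof.
move=> [_ Hsub _ _] Hgh Hh e he; apply: (Hsub _ _ (Hh e he)).
move=> n /= Hn; exact: le_trans Hn (Hgh n).
Qed.

Lemma small_sum I (s : seq (int * R)) (f : (int * R) -> nat -> R) :
  is_ideal I -> (forall p n, 0 <= f p n) ->
  (forall p, p \in s -> small I (f p)) ->
  small I (fun n => \sum_(p <- s) `|(p.1%:~R : R)| * f p n).
Proof.
move=> hI hf; elim: s => [|p s IH] Hs.
  move=> e he; have := ideal0 _ hI; case: hI => _ Hsub _ _ H0.
  apply: (Hsub _ _ H0) => n /=; rewrite big_nil; lra.
have Hp : small I (f p) by apply: Hs; rewrite in_cons eqxx.
have Hs' : small I (fun n => \sum_(p <- s) `|(p.1%:~R : R)| * f p n).
  by apply: IH => q hq; apply: Hs; rewrite in_cons hq orbT.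
move=> e he.
set k : R := `|(p.1%:~R : R)|.
have hk : 0 <= k by rewrite /k normr_ge0.
set d := e / 2 / (k + 1).
have hd : 0 < d by rewrite /d divr_gt0 // ?divr_gt0 //; lra.
have kd : (k + 1) * d = e / 2 by rewrite /d; field; lra.
case: hI => hne Hsub Hun Hnt.
apply: (Hsub _ _ (Hun _ _ (Hp d hd) (Hs' (e/2) ltac:(lra)))).
move=> n /=; rewrite big_cons => H.
case: (lerP d (f p n)) => Hf; [by left| right].
have h1 : k * f p n <= (k + 1) * f p n by have := hf p n; nra.
have h2 : (k + 1) * f p n <= (k + 1) * d.
  by apply: ler_wpM2l; [lra| exact: ltW].
rewrite -/k in H; lra.
Qed.

Lemma small_of_conv I (g : nat -> R) : is_ideal I -> (forall n, 0 <= g n) ->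
  I_converges I g 0 -> small I g.
Proof.
move=> hI hg Hc e he.
have HI := Hc (ball (0:R) e) (ball_open _ _) (ballxx _ he).
case: hI => _ Hsub _ _; apply: (Hsub _ _ HI) => n /= Hn.
rewrite -ball_normE /ball_ /= sub0r normrN ger0_norm //; lra.
Qed.

Lemma conv_of_small I (g : nat -> R) : is_ideal I -> (forall n, 0 <= g n) ->
  small I g -> I_converges I g 0.
Proof.
move=> hI hg Hs U oU U0.
have : nbhs (0:R) U by apply: open_nbhs_nbhs; split.
move/nbhs_ballP => [e /= he Hb].
case: hI => _ Hsub _ _; apply: (Hsub _ _ (Hs e he)) => n /= Hn.
case: (lerP e (g n)) => // Hlt; exfalso; apply: Hn; apply: Hb.
by rewrite -ball_normE /ball_ /= sub0r normrN ger0_norm.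
Qed.
End D.

Theorem proposition3p4 (R : realType) (I : set (set nat)) (A : set R) :
  is_ideal I -> admissible I -> analytic_family I -> P_ideal I ->
  A `<=` [set x | 0 <= x <= 1] ->
  I_Arbault I A -> I_Arbault I (generated_subgroup A).
Proof.
move=> hI _ _ _ _ [a [ha Ha]]; exists a; split => // y [_ [s [Hs [z Hz]]]].
apply: conv_of_small => //; first by move=> n; exact: dist_ge0.
pose f (p : int * R) n := dist_int ((a n)%:R * p.2).
apply: (@small_le _ _ _ (fun n => \sum_(p <- s) `|(p.1%:~R : R)| * f p n)) => //.
  move=> n; have [M HM] := sum_bound R ((a n)%:R) s.
  apply: le_trans (dist_le R _ ((a n)%:Z * z + M)) _.
  have ey : y = z%:~R + \sum_(p <- s) p.1%:~R * p.2 by rewrite -Hz subrK.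
  rewrite intrD intrM ey.
  have -> : ((a n)%:Z%:~R : R) = (a n)%:R by [].
  have -> : (a n)%:R * (z%:~R + \sum_(p <- s) p.1%:~R * p.2) -
     ((a n)%:R * z%:~R + M%:~R) =
     (a n)%:R * \sum_(p <- s) p.1%:~R * p.2 - M%:~R :> R by ring.
  exact: HM.
apply: small_sum => //; first by move=> p n; exact: dist_ge0.
move=> p hp; apply: small_of_conv => //; first by move=> n; exact: dist_ge0.
exact: Ha (Hs p hp).
Qed.
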